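(* Let $H_t=\mathbb{E}(Y_tY_t')$ (expectation under the annealed law $\mathbb{P}$) and $H^\xi_t=\mathbb{E}_\xi(Y_tY_t')$ (expectation under the quenched law $\mathbb{P}_\xi$), where $Y_t'$ is the transpose. Then $$\frac1t H_t\to\eta^2,$$ and for $\Pi$-almost every $\xi$, $$\frac1t H^\xi_t\to\eta^2,$$ as $t\to\infty$, where $(\eta^2)_{ij}=\sum_{u\in\mathbb{Z}^n}(u_i-b_i)(u_j-b_j)\bar P(u)$.
   Context: Let $\mathbb{S}$ be a finite set and $\pi$ a probability measure on $\mathbb{S}$. The environment $\xi=\{\xi_t(x): x\in\mathbb{Z}^n, t\in\mathbb{Z}^+\}$ consists of i.i.d. $\mathbb{S}$-valued random variables with law $\pi$; $\Pi$ denotes its law. Let $P_0$ be a probability distribution on $\mathbb{Z}^n$ and $c:\mathbb{Z}^n\times\mathbb{S}\to\mathbb{R}$ such that: $0\le P_0(u)+c(u,s)\le 1$ for all $u,s$; $\sum_{u}c(u,s)=0$ for all $s$; $\sum_{s}c(u,s)\pi(s)=0$ for all $u$; $P_0$ and $c$ have bounded range; and there is $b^c\in\mathbb{R}^n$ with $\sum_u u\,c(u,s)=b^c$ for all $s$. Given $\xi$, $(X_t)$ is the Markov chain on $\mathbb{Z}^n$ (from a fixed starting point) with $\mathbb{P}(X_{t+1}=y\mid X_t=x,\xi)=P_0(y-x)+c(y-x,\xi_t(x))$; $\mathbb{P}_\xi$ denotes this quenched law and $\mathbb{P}=\int\mathbb{P}_\xi\,\Pi(d\xi)$ the annealed law.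 Let $\bar P(u)=P_0(u)+\sum_s\pi(s)c(u,s)$, $b^0=\sum_u uP_0(u)$, $b=b^0+b^c$, $Y_t=X_t-tb$ (a column vector). *)

(* Defs.v *)
From HB Require Import structures.
From mathcomp Require Import all_boot all_order all_algebra.
From mathcomp Require Import all_classical all_reals all_analysis.
Set Implicit Arguments. Unset Strict Implicit. Unset Printing Implicit Defensive.
Import Order.TTheory GRing.Theory Num.Theory.
Local Open Scope ring_scope.
Local Open Scope classical_set_scope.

Notation Zvec n := 'cV[int]_n.

Definition toR {R : realType} {n : nat} (u : Zvec n) : 'cV[R]_n :=
  map_mx (fun z : int => z%:~R) u.

(* The environment xi = {xi_t(x)} (a family of S-valued random variables
   on (Omega, P)) consists of i.i.d. random variables with law pi:
   each event {xi_t(x) = s} is measurable, and for any finite family of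
   distinct space-time points (t_k, x_k) and values s_k,
   P(xi_{t_k}(x_k) = s_k for all k) = prod_k pi(s_k). *)
Definition iid_env {d : measure_display} {Omega : measurableType d}
  {R : realType} {n : nat} {S : finType}
  (P : probability Omega R) (xi : nat -> Zvec n -> Omega -> S) (pi : S -> R) : Prop :=
  (forall t x s, measurable [set w | xi t x w = s]) /\
  (forall (I : seq (nat * Zvec n)) (f : nat * Zvec n -> S), uniq I ->
     P [set w | forall k, k \in I -> xi k.1 k.2 w = f k]
       = (\prod_(k <- I) pi (f k))%:E).

(* Quenched expectation of f(X_{t0+k}) for the Markov chain in the
   (deterministic) environment env, started from X_{t0} = x, with
   transition probabilities P(X_{t+1} = y | X_t = x) = P0(y-x) + c(y-x, env t x).
   U is a finite duplicate-free list containing all possible jumps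
   (outside U, P0 and c vanish), so the sum over u in Z^n reduces to
   a sum over U. *)
Fixpoint qexp {R : realType} {n : nat} {S : finType}
  (U : seq (Zvec n)) (P0 : Zvec n -> R) (c : Zvec n -> S -> R)
  (env : nat -> Zvec n -> S) (t0 : nat) (x : Zvec n) (k : nat)
  (f : Zvec n -> R) : R :=
  match k with
  | 0 => f x
  | k'.+1 => \sum_(u <- U) (P0 u + c u (env t0 x)) *
               qexp U P0 c env t0.+1 (x + u) k' f
  end.

Definition drift0 {R : realType} {n : nat} (U : seq (Zvec n)) (P0 : Zvec n -> R)
  : 'cV[R]_n := \sum_(u <- U) P0 u *: toR u.

Definition Pbar {R : realType} {n : nat} {S : finType}
  (P0 : Zvec n -> R) (c : Zvec n -> S -> R) (pi : S -> R) (u : Zvec n) : R :=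
  P0 u + \sum_(s : S) pi s * c u s.

Definition eta2 {R : realType} {n : nat} {S : finType}
  (U : seq (Zvec n)) (P0 : Zvec n -> R) (c : Zvec n -> S -> R) (pi : S -> R)
  (b : 'cV[R]_n) (i j : 'I_n) : R :=
  \sum_(u <- U) ((toR u) i 0 - b i 0) * ((toR u) j 0 - b j 0) * Pbar P0 c pi u.

(* Quenched second moment H^xi_t = E_xi (Y_t Y_t'), entry (i,j),
   with Y_t = X_t - t b and X_0 = x0. *)
Definition Hq {R : realType} {n : nat} {S : finType}
  (U : seq (Zvec n)) (P0 : Zvec n -> R) (c : Zvec n -> S -> R)
  (env : nat -> Zvec n -> S) (x0 : Zvec n) (b : 'cV[R]_n) (t : nat) (i j : 'I_n) : R :=
  qexp U P0 c env 0 x0 t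
    (fun x => ((toR x) i 0 - t%:R * b i 0) * ((toR x) j 0 - t%:R * b j 0)).

(* Main.v *)
Require Import Defs.
From HB Require Import structures.
From mathcomp Require Import all_boot all_order all_algebra.
From mathcomp Require Import all_classical all_reals all_analysis.
From mathcomp Require Import ring lra zify.
From mathcomp Require Import measurable_realfun.
Import Order.TTheory GRing.Theory Num.Theory numFieldNormedType.Exports.
Local Open Scope ring_scope.
Local Open Scope classical_set_scope.
Section All.
Variables (R : realType) (n : nat) (S : finType) (pi : S -> R)
  (d : measure_display) (Omega : measurableType d) (P : probability Omega R)
  (xi : nat -> Zvec n -> Omega -> S) (s0 : S)
  (U : seq (Zvec n)) (P0 : Zvec n -> R) (c : Zvec n -> S -> R)
  (b : 'cV[R]_n) (i j : 'I_n) (x0 : Zvec n).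
Hypothesis Hxi : iid_env P xi pi.
Hypothesis HP0 : \sum_(u <- U) P0 u = 1.
Hypothesis Hc0 : forall s, \sum_(u <- U) c u s = 0.
Hypothesis Hq0 : forall u s, 0 <= P0 u + c u s.
Hypothesis hb : forall s i', \sum_(u <- U) (P0 u + c u s) * (toR u) i' 0 = b i' 0.

Local Notation qe := (qexp U P0 c).

Lemma qsum1 s : \sum_(u <- U) (P0 u + c u s) = 1.
Proof. by rewrite big_split /= HP0 Hc0 addr0. Qed.

Lemma qexpS env k t0 x f : qe env t0 x k.+1 f =
  \sum_(u <- U) (P0 u + c u (env t0 x)) * qe env t0.+1 (x + u) k f.
Proof. by []. Qed.

Lemma qexp_last env k t0 x f : qe env t0 x k.+1 f =
  qe env t0 x k (fun y => \sum_(u <- U) (P0 u + c u (env (t0 + k)%N y)) * f (y + u)).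
Proof.
elim: k t0 x => [|k IH] t0 x.
  by rewrite qexpS /= addn0; apply: eq_bigr => u _.
rewrite qexpS [RHS]qexpS; apply: eq_bigr => u _; rewrite IH addSnnS //.
Qed.

Lemma qexp_add env k t0 x f g : qe env t0 x k (fun y => f y + g y) =
  qe env t0 x k f + qe env t0 x k g.
Proof.
elim: k t0 x => [|k IH] t0 x //.
by rewrite !qexpS -big_split /=; apply: eq_bigr => u _; rewrite IH mulrDr.
Qed.

Lemma qexp_scale env k t0 x a f : qe env t0 x k (fun y => a * f y) =
  a * qe env t0 x k f.
Proof.
elim: k t0 x => [|k IH] t0 x //.
rewrite !qexpS mulr_sumr; apply: eq_bigr => u _; rewrite IH; ring.
Qed.

Lemma qexp_cst env k t0 x a : qe env t0 x k (fun _ => a) = a.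
Proof.
elim: k t0 x => [|k IH] t0 x //.
rewrite qexpS; under eq_bigr do rewrite IH.
by rewrite -mulr_suml qsum1 mul1r.
Qed.

Lemma qexp_sum env k t0 x (I : Type) (r : seq I) (F : I -> Zvec n -> R) :
  qe env t0 x k (fun y => \sum_(i <- r) F i y) = \sum_(i <- r) qe env t0 x k (F i).
Proof.
elim: r => [|a r IH].
  by under [X in qe _ _ _ _ X]funext do rewrite big_nil; rewrite qexp_cst big_nil.
under [X in qe _ _ _ _ X]funext do rewrite big_cons.
by rewrite qexp_add IH big_cons.
Qed.

Lemma qexp_bound env k t0 x f M : (forall y, `|f y| <= M) ->
  `|qe env t0 x k f| <= M.
Proof.
move=> hf; elim: k t0 x => [|k IH] t0 x; first exact: hf. rewrite qexpS.
apply: (le_trans (ler_norm_sum _ _ _)).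
apply: (@le_trans _ _ (\sum_(u <- U) (P0 u + c u (env t0 x)) * M)).
  apply: ler_sum => u _; rewrite normrM ger0_norm ?Hq0 //.
  by apply: ler_wpM2l; rewrite ?Hq0.
by rewrite -mulr_suml qsum1 mul1r.
Qed.

Fixpoint reach (x : Zvec n) (k : nat) : seq (Zvec n) :=
  match k with 0 => [:: x] | k'.+1 => flatten [seq reach (x + u) k' | u <- U] end.

Lemma qexp_ext_reach env k t0 x f g : (forall y, y \in reach x k -> f y = g y) ->
  qe env t0 x k f = qe env t0 x k g.
Proof.
elim: k t0 x => [|k IH] t0 x h; first by apply: h; rewrite inE.
rewrite !qexpS; apply: eq_big_seq => u uU; congr (_ * _); apply: IH => y yr; apply: h.
by apply/flattenP; exists (reach (x + u) k) => //; apply/mapP; exists u.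
Qed.

Lemma qexp_decomp env k t0 x f : qe env t0 x k f =
  \sum_(y <- undup (reach x k)) f y * qe env t0 x k (fun z => (z == y)%:R).
Proof.
under [RHS]eq_bigr do rewrite -qexp_scale.
rewrite -qexp_sum; apply: qexp_ext_reach => y yr.
rewrite (bigD1_seq y) ?undup_uniq ?mem_undup //= eqxx mulr1 big1 ?addr0 //.
by move=> z /negPf zy; rewrite eq_sym zy mulr0.
Qed.




Definition hk (k : nat) (z : Zvec n) : R :=
  ((toR z) i 0 - k%:R * b i 0) * ((toR z) j 0 - k%:R * b j 0).
Definition Dd (i' : 'I_n) (u : Zvec n) : R := (toR u) i' 0 - b i' 0.
Definition gf (s : S) : R := \sum_(u <- U) c u s * (Dd i u * Dd j u).
Definition e0 : R := \sum_(u <- U) P0 u * (Dd i u * Dd j u).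

Lemma toRD (y u : Zvec n) (i' : 'I_n) : (toR (y + u) : 'cV[R]_n) i' 0 = (toR y : 'cV[R]_n) i' 0 + (toR u : 'cV[R]_n) i' 0.
Proof. by rewrite /toR !mxE intrD. Qed.

Lemma step_id s k y : \sum_(u <- U) (P0 u + c u s) * hk k.+1 (y + u) =
  hk k y + e0 + gf s.
Proof.
set Ai := (toR y) i 0 - k%:R * b i 0.
set Aj := (toR y) j 0 - k%:R * b j 0.
have sD i' : \sum_(u <- U) (P0 u + c u s) * Dd i' u = 0.
  rewrite /Dd; under eq_bigr do rewrite mulrBr.
  by rewrite sumrB hb -mulr_suml qsum1 // mul1r subrr.
rewrite (eq_bigr (fun u => (P0 u + c u s) * hk k y + Ai * ((P0 u + c u s) * Dd j u)
   + Aj * ((P0 u + c u s) * Dd i u) + (P0 u * (Dd i u * Dd j u) + c u s * (Dd i u * Dd j u)))); last first.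
  move=> u _; rewrite /hk /Dd !toRD -natr1 /Ai /Aj; ring.
rewrite !big_split /= -!mulr_sumr -mulr_suml qsum1 // !sD /e0 /gf; ring.
Qed.

Lemma Hq_dec env t : qe env 0 x0 t (hk t) =
  hk 0 x0 + t%:R * e0 + \sum_(k < t) qe env 0 x0 k (fun y => gf (env k y)).
Proof.
elim: t => [|t IH]; first by rewrite big_ord0 mul0r !addr0.
rewrite qexp_last // add0n.
under [X in qe _ _ _ _ X]funext do rewrite step_id.
rewrite !qexp_add // qexp_cst // IH big_ord_recr /= -natr1; ring.
Qed.


Local Notation pt := (nat * Zvec n)%type.
Definition xv (p : pt) (w : Omega) : S := xi p.1 p.2 w.
Definition Dep (I : seq pt) (W : Omega -> R) :=
  forall w w', (forall p, p \in I -> xv p w = xv p w') -> W w = W w'.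

Lemma ind1 (A : set Omega) w : A w -> \1_A w = 1 :> R.
Proof. by move=> h; rewrite indicE mem_set. Qed.
Lemma ind0 (A : set Omega) w : ~ A w -> \1_A w = 0 :> R.
Proof. by move=> h; rewrite indicE memNset. Qed.

Definition Aset (I : seq pt) (F : pt -> S) : set Omega :=
  [set w | forall k, k \in I -> xi k.1 k.2 w = F k].

Lemma Aset_meas I F : measurable (Aset I F).
Proof.
elim: I => [|p I IH].
  by rewrite (_ : Aset _ _ = setT) //; apply/seteqP; split => w //= _ k.
rewrite (_ : Aset _ _ = [set w | xi p.1 p.2 w = F p] `&` Aset I F).
  by apply: measurableI => //; apply Hxi.1.
apply/seteqP; split => w /=.
  by move=> h; split; [apply: h; rewrite inE eqxx | move=> k kI; apply: h; rewrite inE kI orbT].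
by move=> [h1 h2] k; rewrite inE => /orP [/eqP -> //|]; apply: h2.
Qed.

Lemma int_simple (T : finType) (a : T -> R) (A : T -> set Omega) (m : T -> R) :
  (forall k, measurable (A k)) -> (forall k, P (A k) = (m k)%:E) ->
  (\int[P]_w (\sum_k a k * \1_(A k) w)%:E = (\sum_k a k * m k)%:E)%E.
Proof.
move=> mA hA.
under eq_integral do rewrite -sumEFin.
rewrite integral_sum //; last first.
  move=> k; under eq_fun do rewrite EFinM.
  by apply: integrableZl => //; apply: integrable_indic.
rewrite -sumEFin; apply: eq_bigr => k _.
under eq_integral do rewrite EFinM.
rewrite integralZl //; last by apply: integrable_indic.
by rewrite integral_indic // setIT EFinM -hA.
Qed.

Lemma int_simple_integrable (T : finType) (a : T -> R) (A : T -> set Omega) :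
  (forall k, measurable (A k)) ->
  P.-integrable setT (fun w => (\sum_k a k * \1_(A k) w)%:E).
Proof.
move=> mA.
under eq_fun do rewrite -sumEFin.
apply: integrable_sum => // k _.
under eq_fun do rewrite EFinM.
by apply: integrableZl => //; apply: integrable_indic.
Qed.


Definition cfgf (I : seq pt) (f : {ffun 'I_(size I) -> S}) (p : pt) : S :=
  if insub (index p I) is Some k then f k else s0.
Definition Acfg I f := Aset I (cfgf I f).
Definition fw (I : seq pt) w : {ffun 'I_(size I) -> S} :=
  [ffun k : 'I_(size I) => xv (nth (0%N, 0) I k) w].

Lemma cfgf_fw I w p : p \in I -> cfgf I (fw I w) p = xv p w.
Proof.
move=> pI; rewrite /cfgf; case: insubP => [k _ kE|]; last by rewrite index_mem pI.
by rewrite ffunE kE nth_index.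
Qed.

Lemma Acfg_self I w : Acfg I (fw I w) w.
Proof. by move=> p pI; rewrite cfgf_fw. Qed.

Lemma Acfg_fw I f w : uniq I -> Acfg I f w -> f = fw I w.
Proof.
move=> uI h; apply/ffunP => k; rewrite ffunE.
have kI : nth (0%N, 0) I k \in I by apply: mem_nth.
have := h _ kI; rewrite /cfgf index_uniq //.
case: insubP => [k' _ k'E|]; last by rewrite ltn_ord.
by have -> : k' = k by apply: val_inj.
Qed.

Lemma Dep_repr I W : uniq I -> Dep I W ->
  exists v : {ffun 'I_(size I) -> S} -> R,
    forall w, W w = \sum_f v f * \1_(Acfg I f) w.
Proof.
move=> uI dW.
pose v := fun f => match pselect (exists w, Acfg I f w) with
  | left h => W (proj1_sig (cid h)) | right _ => 0 end.
exists v => w.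
rewrite (bigD1 (fw I w)) //= (ind1 _ _ (Acfg_self I w)) mulr1 big1 ?addr0.
  rewrite /v; case: pselect => [h|[]]; last by exists w; apply: Acfg_self.
  case: (cid h) => w' hw' /=; apply: dW => p pI.
  by rewrite -(cfgf_fw _ _ _ pI); exact: (esym (hw' _ pI)).
move=> f fne; rewrite ind0 ?mulr0 //.
by move=> /(Acfg_fw _ _ _ uI) ef; move: fne; rewrite ef eqxx.
Qed.

Lemma P_Acfg I f : uniq I -> P (Acfg I f) = (\prod_(k <- I) pi (cfgf I f k))%:E.
Proof. by move=> uI; apply: Hxi.2. Qed.

Lemma P_Acfg_q I f q s : uniq I -> q \notin I ->
  P (Acfg I f `&` [set w | xv q w = s]) = (pi s * \prod_(k <- I) pi (cfgf I f k))%:E.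
Proof.
move=> uI qI.
pose G := fun p => if p == q then s else cfgf I f p.
have -> : Acfg I f `&` [set w | xv q w = s] = Aset (q :: I) G.
  apply/seteqP; split => w /=.
    move=> [h1 h2] k; rewrite inE /G => /orP [/eqP ->|kI]; first by rewrite eqxx.
    by rewrite (_ : (k == q) = false) ?h1 //; apply/negP => /eqP kq; move: qI; rewrite -kq kI.
  move=> h; split.
    move=> k kI; rewrite h ?inE ?kI ?orbT // /G.
    by rewrite (_ : (k == q) = false) //; apply/negP => /eqP kq; move: qI; rewrite -kq kI.
  by have := h q; rewrite inE eqxx /G eqxx /xv; apply.
rewrite Hxi.2 /=; last by rewrite qI uI.
rewrite big_cons /G eqxx; congr (_ * _)%:E; apply: eq_big_seq => k kI.
by rewrite (_ : (k == q) = false) //; apply/negP => /eqP kq; move: qI; rewrite -kq kI.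
Qed.

Lemma indep I W q (h : S -> R) : uniq I -> q \notin I -> Dep I W ->
  (\int[P]_w (W w * h (xv q w))%:E =
   (\int[P]_w (W w)%:E) * (\sum_s pi s * h s)%:E)%E.
Proof.
move=> uI qI dW; case: (Dep_repr _ _ uI dW) => v hv.
have mA f : measurable (Acfg I f) by apply: Aset_meas.
have mB s : measurable [set w | xv q w = s] by apply: Hxi.1.
have e1 : (\int[P]_w (W w)%:E = (\sum_f v f * \prod_(k <- I) pi (cfgf I f k))%:E)%E.
  under eq_integral do rewrite hv.
  by apply: int_simple => // f; apply: P_Acfg.
have e2 : forall w, W w * h (xv q w) = \sum_(p : {ffun 'I_(size I) -> S} * S)
     (v p.1 * h p.2) * \1_(Acfg I p.1 `&` [set w | xv q w = p.2]) w.
  move=> w; rewrite hv.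
  have -> : h (xv q w) = \sum_s h s * \1_([set w | xv q w = s]) w.
    rewrite (bigD1 (xv q w)) //= ind1 // mulr1 big1 ?addr0 //.
    move=> s sne; rewrite ind0 ?mulr0 //= => e.
    by move: sne; rewrite e eqxx.
  rewrite mulr_suml -(pair_bigA _ (fun f s => v f * h s * \1_(Acfg I f `&` [set w | xv q w = s]) w)).
  apply: eq_bigr => f _; rewrite mulr_sumr; apply: eq_bigr => s _.
  rewrite indicI /=; ring.
under eq_integral do rewrite e2.
rewrite (@int_simple _ _ _ (fun p => pi p.2 * \prod_(k <- I) pi (cfgf I p.1 k))); last first.
  - by move=> p; apply: P_Acfg_q.
  - by move=> p; apply: measurableI.
rewrite e1 -EFinM; congr (_ %:E).
rewrite -(pair_bigA _ (fun f s => v f * h s * (pi s * \prod_(k <- I) pi (cfgf I f k)))).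
rewrite big_distrl; apply: eq_bigr => f _ /=; rewrite mulr_sumr; apply: eq_bigr => s _; ring.
Qed.

Lemma Dep_integrable I W : Dep I W -> P.-integrable setT (EFin \o W).
Proof.
move=> dW.
have dW' : Dep (undup I) W by move=> w w' h; apply: dW => p pI; apply: h; rewrite mem_undup.
case: (Dep_repr _ _ (undup_uniq I) dW') => v hv.
rewrite (_ : EFin \o W = fun w => (\sum_f v f * \1_(Acfg (undup I) f) w)%:E).
  by apply: int_simple_integrable => f; apply: Aset_meas.
by apply: funext => w /=; rewrite hv.
Qed.

Hypothesis Hpi : forall u, \sum_(s : S) c u s * pi s = 0.

Definition env (w : Omega) := fun t x => xi t x w.
Definition Zk (k : nat) (w : Omega) : R := qe (env w) 0 x0 k (fun y => gf (xi k y w)).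
Definition Ssum (N : nat) (w : Omega) : R := \sum_(k < N) Zk k w.

Fixpoint pts (t0 : nat) (x : Zvec n) (k : nat) : seq pt :=
  match k with 0 => [::]
  | k'.+1 => (t0, x) :: flatten [seq pts t0.+1 (x + u) k' | u <- U] end.

Lemma pts_time t0 x k p : p \in pts t0 x k -> (t0 <= p.1 < t0 + k)%N.
Proof.
elim: k t0 x => [|k IH] t0 x //=; rewrite inE => /orP [/eqP -> /=|].
  by rewrite leqnn addnS ltnS leq_addr.
move=> /flattenP [s /mapP [u _ ->]] /IH /andP [h1 h2].
by rewrite (ltnW h1) /= addnS -addSn.
Qed.

Lemma pts_mono t0 x k : {subset pts t0 x k <= pts t0 x k.+1}.
Proof.
elim: k t0 x => [|k IH] t0 x p //=; rewrite !inE => /orP [->//|] /flattenP [s /mapP [u uU ->] ps].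
apply/orP; right; apply/flattenP; exists (pts t0.+1 (x + u) k.+1); last by apply: IH.
by apply/mapP; exists u.
Qed.

Lemma pts_le t0 x k N : (k <= N)%N -> {subset pts t0 x k <= pts t0 x N}.
Proof.
elim: N => [|N IH]; first by rewrite leqn0 => /eqP ->.
rewrite leq_eqVlt => /orP [/eqP -> //|]; rewrite ltnS => /IH h p /h; apply: pts_mono.
Qed.

Lemma pts_last t0 x k y : y \in reach x k -> ((t0 + k)%N, y) \in pts t0 x k.+1.
Proof.
elim: k t0 x => [|k IH] t0 x /=.
  by rewrite inE => /eqP ->; rewrite addn0 inE eqxx.
move=> /flattenP [s /mapP [u uU ->] yr]; rewrite inE; apply/orP; right.
apply/flattenP; exists (pts t0.+1 (x + u) k.+1); first by apply/mapP; exists u.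
by rewrite addnS -addSn; apply: IH.
Qed.

Lemma Dep_mono I J W : {subset I <= J} -> Dep I W -> Dep J W.
Proof. by move=> sIJ dW w w' h; apply: dW => p pI; apply: h; apply: sIJ. Qed.

Lemma Dep_cst I a : Dep I (fun _ => a).
Proof. by []. Qed.

Lemma Dep_mul I W1 W2 : Dep I W1 -> Dep I W2 -> Dep I (fun w => W1 w * W2 w).
Proof. by move=> d1 d2 w w' h; rewrite (d1 w w' h) (d2 w w' h). Qed.

Lemma Dep_sum I (T : Type) (r : seq T) (F : T -> Omega -> R) :
  (forall k, Dep I (F k)) -> Dep I (fun w => \sum_(k <- r) F k w).
Proof. by move=> dF w w' h; apply: eq_bigr => k _; apply: dF. Qed.

Lemma Dep_xv I p (h : S -> R) : p \in I -> Dep I (fun w => h (xv p w)).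
Proof. by move=> pI w w' e; rewrite e. Qed.

Lemma Dep_qexp k t0 x I (F : Omega -> Zvec n -> R) : {subset pts t0 x k <= I} ->
  (forall y, y \in reach x k -> Dep I (fun w => F w y)) ->
  Dep I (fun w => qe (env w) t0 x k (F w)).
Proof.
move=> + + w w' h; elim: k t0 x => [|k IH] t0 x sub hF.
  by apply: hF => //; rewrite inE.
rewrite !qexpS; apply: eq_big_seq => u uU.
have -> : env w t0 x = env w' t0 x.
  by have := h (t0, x) (sub _ (mem_head _ _)).
congr (_ * _); apply: IH.
  move=> p pp; apply: sub => /=; rewrite inE; apply/orP; right.
  by apply/flattenP; exists (pts t0.+1 (x + u) k) => //; apply/mapP; exists u.
move=> y yr; apply: hF => /=.
by apply/flattenP; exists (reach (x + u) k) => //; apply/mapP; exists u.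
Qed.

Lemma Dep_Z k : Dep (pts 0 x0 k.+1) (Zk k).
Proof.
apply: Dep_qexp; first by apply: pts_mono.
move=> y yr; apply: (Dep_xv _ (k, y)).
by have := pts_last 0 _ _ _ yr; rewrite add0n.
Qed.

Lemma Dep_S N : Dep (pts 0 x0 N) (Ssum N).
Proof.
apply: Dep_sum => k; apply: Dep_mono (Dep_Z k).
by apply: pts_le; apply: ltn_ord.
Qed.

Lemma sum_pi_gf : \sum_(s : S) pi s * gf s = 0.
Proof.
rewrite /gf; under eq_bigr do rewrite mulr_sumr.
rewrite exchange_big /=; apply: big1 => u _.
rewrite (eq_bigr (fun s => (c u s * pi s) * (Dd i u * Dd j u))); last by move=> s _; ring.
by rewrite -mulr_suml Hpi mul0r.
Qed.

Definition pN N y w := qe (env w) 0 x0 N (fun z => (z == y)%:R).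

Lemma Dep_pN N y : Dep (pts 0 x0 N) (pN N y).
Proof. by apply: Dep_qexp => // z _; apply: Dep_cst. Qed.

Lemma notin_pts N y : (N, y) \notin undup (pts 0 x0 N).
Proof. by rewrite mem_undup; apply/negP => h; have := pts_time _ _ _ _ h; rewrite /= add0n ltnn. Qed.

Lemma E_WZ N W : Dep (pts 0 x0 N) W -> (\int[P]_w (W w * Zk N w)%:E = 0)%E.
Proof.
move=> dW.
have e w : W w * Zk N w = \sum_(y <- undup (reach x0 N)) (W w * pN N y w) * gf (xv (N, y) w).
  rewrite /Zk qexp_decomp mulr_sumr; apply: eq_bigr => y _; rewrite /xv /pN /=; ring.
under eq_integral do rewrite e -sumEFin.
have dWp y : Dep (pts 0 x0 N) (fun w => W w * pN N y w) by apply: Dep_mul => //; apply: Dep_pN.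
rewrite integral_sum //; last first.
  move=> y; apply: (Dep_integrable ((N, y) :: pts 0 x0 N)).
  apply: Dep_mul; first by apply: Dep_mono (dWp y) => p pI; rewrite inE pI orbT.
  by apply: Dep_xv; rewrite inE eqxx.
apply: big1 => y _.
have h := indep (undup (pts 0 x0 N)) (fun w => W w * pN N y w) (N, y) gf (undup_uniq _)
  (notin_pts N y).
rewrite h; first by rewrite sum_pi_gf mule0.
by apply: Dep_mono (dWp y) => p; rewrite mem_undup.
Qed.

Definition Mg : R := \sum_(s : S) `|gf s|.

Lemma gf_le s : `|gf s| <= Mg.
Proof.
rewrite /Mg (bigD1 s) //= lerDl; apply: sumr_ge0 => ? _; apply: normr_ge0.
Qed.

Lemma Zk_le k w : `|Zk k w| <= Mg.
Proof. by apply: qexp_bound => y; apply: gf_le. Qed.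

Lemma integrable_Dep {I W} : Dep I W -> P.-integrable setT (fun w => (W w)%:E).
Proof. exact: Dep_integrable. Qed.

Lemma SsumS N w : Ssum N.+1 w = Ssum N w + Zk N w.
Proof. by rewrite /Ssum big_ord_recr. Qed.

Lemma E_S N : (\int[P]_w (Ssum N w)%:E = 0)%E.
Proof.
elim: N => [|N IH].
  under eq_integral do rewrite /Ssum big_ord0.
  by rewrite integral0.
under eq_integral do rewrite SsumS EFinD.
rewrite integralD //; last 2 first.
- exact: (integrable_Dep (Dep_S N)).
- exact: (integrable_Dep (Dep_Z N)).
rewrite IH add0e.
under eq_integral do rewrite -(mul1r (Zk N _)).
by apply: E_WZ; apply: Dep_cst.
Qed.

Lemma E_S2 N : (\int[P]_w ((Ssum N w) ^+ 2)%:E <= (N%:R * Mg ^+ 2)%:E)%E.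
Proof.
elim: N => [|N IH].
  under eq_integral do rewrite /Ssum big_ord0 expr0n /=.
  by rewrite integral0 mul0r.
have e w : Ssum N.+1 w ^+ 2 = (Ssum N w ^+ 2 + (2 * Ssum N w) * Zk N w) + Zk N w ^+ 2.
  by rewrite SsumS; ring.
under eq_integral do rewrite e !EFinD.
have dS2 : Dep (pts 0 x0 N) (fun w => Ssum N w ^+ 2).
  by move=> w w' h; rewrite (Dep_S N w w' h).
have d2S : Dep (pts 0 x0 N) (fun w => 2 * Ssum N w).
  by apply: Dep_mul; [apply: Dep_cst | apply: Dep_S].
have dZ2 : Dep (pts 0 x0 N.+1) (fun w => Zk N w ^+ 2).
  by move=> w w' h; rewrite (Dep_Z N w w' h).
have dSZ : Dep (pts 0 x0 N.+1) (fun w => 2 * Ssum N w * Zk N w).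
  apply: Dep_mul; last by apply: Dep_Z.
  by apply: Dep_mono d2S; apply: pts_mono.
rewrite integralD //; last 2 first.
- under eq_fun do rewrite -EFinD.
  apply: (@integrable_Dep (pts 0 x0 N.+1)).
  move=> w w' h; rewrite (dSZ w w' h); congr (_ + _).
  by apply: (Dep_mono _ _ _ (pts_mono 0 x0 N) dS2).
- exact: (integrable_Dep dZ2).
rewrite integralD //; last 2 first.
- exact: (integrable_Dep dS2).
- exact: (integrable_Dep dSZ).
rewrite E_WZ // adde0.
have hZ : (\int[P]_w (Zk N w ^+ 2)%:E <= (Mg ^+ 2)%:E)%E.
  apply: (@le_trans _ _ (\int[P]_w (cst (Mg ^+ 2)%:E w))%E).
    apply: le_integral => //; first exact: (integrable_Dep dZ2).
      exact: (integrable_Dep (Dep_cst [::] (Mg ^+ 2))).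
    move=> w _; rewrite lee_fin /=.
    have := Zk_le N w; rewrite ler_norml => /andP [h1 h2].
    have hM : 0 <= Mg by apply: (le_trans (normr_ge0 _) (Zk_le N w)).
    nra.
  rewrite integral_cst // [X in (_ * X)%E](_ : _ = 1%E) ?mule1 //; exact: probability_setT.
apply: (le_trans (leeD IH hZ)).
by rewrite -EFinD lee_fin -natr1; lra.
Qed.

Lemma L_cvg (A e : R) (s : nat -> R) :
  (forall eps, 0 < eps -> \forall t \near \oo, `|s t| <= eps * t%:R) ->
  (fun t => t%:R^-1 * (A + t%:R * e + s t)) @ \oo --> e.
Proof.
move=> hs; apply/cvgrPdist_lt => eps he.
have he4 : 0 < eps / 4 by rewrite divr_gt0.
near=> t.
have ht : (4 * `|A| / eps) + 1 <= t%:R by near: t; apply: nbhs_infty_ger.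
have hst : `|s t| <= eps / 4 * t%:R by near: t; apply: hs.
have tpos : 0 < t%:R :> R by apply: (lt_le_trans _ ht); apply: ltr_wpDl => //;
  rewrite mulr_ge0 // ?invr_ge0 ?mulr_ge0 // ltW.
have -> : e - t%:R^-1 * (A + t%:R * e + s t) = - (A + s t) / t%:R.
  by field; rewrite gt_eqF.
rewrite normrM normrN normfV (gtr0_norm tpos) ltr_pdivrMr //.
apply: (le_lt_trans (ler_normD _ _)).
have hA : 4 * `|A| < eps * t%:R.
  have : 4 * `|A| / eps < t%:R by apply: (lt_le_trans _ ht); rewrite ltrDl.
  by rewrite ltr_pdivrMr //; lra.
have : 0 <= `|A| by [].
lra.
Unshelve. all: end_near.
Qed.



Lemma Ssum_diff a k w : `|Ssum (a + k) w - Ssum a w| <= k%:R * Mg.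
Proof.
elim: k => [|k IH]; first by rewrite addn0 subrr normr0 mul0r.
rewrite addnS SsumS.
have h1 := Zk_le (a + k) w.
have h2 := ler_normD (Ssum (a + k) w - Ssum a w) (Zk (a + k) w).
rewrite -natr1.
have -> : Ssum (a + k) w + Zk (a + k) w - Ssum a w = (Ssum (a + k) w - Ssum a w) + Zk (a + k) w by ring.
lra.
Qed.

Lemma sqrt_floor t : (0 < t)%N -> exists m, ((m.+1 ^ 2 <= t) && (t < m.+2 ^ 2))%N.
Proof.
elim: t => [//|t IH] _.
case: (posnP t) => [->|tp]; first by exists 0%N.
case: (IH tp) => m /andP [h1 h2].
case: (ltnP t.+1 (m.+2 ^ 2)) => h3.
  by exists m; rewrite h3 andbT; lia.
by exists m.+1; apply/andP; split; nia.
Qed.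

Lemma as_lemma w :
  (forall delta, 0 < delta -> \forall m \near \oo,
      (Ssum (m.+1 ^ 2) w / ((m.+1 ^ 2)%:R)) ^+ 2 <= delta) ->
  forall eps, 0 < eps -> \forall t \near \oo, `|Ssum t w| <= eps * t%:R.
Proof.
move=> ha eps he.
have hM : 0 <= Mg by apply: (le_trans (normr_ge0 _) (Zk_le 0 w)).
have hd : 0 < (eps / 2) ^+ 2 by rewrite exprn_gt0 // divr_gt0.
case: (ha _ hd) => M1 _ hM1.
case: (nbhs_infty_ger (4 * Mg / eps)) => M2 _ hM2.
exists ((maxn M1 M2).+1 ^ 2)%N => // t /= ht.
have [m /andP [hm1 hm2]] : exists m, ((m.+1 ^ 2 <= t) && (t < m.+2 ^ 2))%N.
  by apply: sqrt_floor; apply: leq_trans ht; rewrite expn_gt0.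
have mM : (maxn M1 M2 <= m)%N by nia.
have mM1 : (M1 <= m)%N by apply: leq_trans mM; apply: leq_maxl.
have mM2 : (M2 <= m)%N by apply: leq_trans mM; apply: leq_maxr.
have a1 := hM1 m mM1.
have a2 := hM2 m mM2.
have a2' : 4 * Mg / eps <= m.+1%:R by apply: (le_trans a2); rewrite ler_nat.
rewrite ler_pdivrMr // mulrC in a2'.
set K := (m.+1 ^ 2)%N in hm1 a1.
have Kpos : (0 < K)%N by rewrite expn_gt0.
have KR : (K%:R : R) = m.+1%:R * m.+1%:R by rewrite /K natrX expr2.
have hK : `|Ssum K w| <= eps / 2 * K%:R.
  have Kp : 0 < K%:R :> R by rewrite ltr0n.
  have : `|Ssum K w / K%:R| <= eps / 2.
    move: a1; set y := Ssum K w / K%:R => a1.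
    have he2 : 0 < eps / 2 by rewrite divr_gt0.
    case: (lerP 0 y) => hy; [rewrite ger0_norm // | rewrite ltr0_norm //]; nra.
  by rewrite normrM normfV (gtr0_norm Kp) ler_pdivrMr.
have hD := Ssum_diff K (t - K) w.
rewrite subnKC // in hD.
have tK : ((t - K)%:R : R) <= 2 * m.+1%:R.
  rewrite -natrM ler_nat; rewrite /K in hm1 *; nia.
have KT : (K%:R : R) <= t%:R by rewrite ler_nat.
have hm0 : 0 <= m.+1%:R :> R by [].
have h3 : (t - K)%:R * Mg <= 2 * m.+1%:R * Mg by apply: ler_wpM2r.
have h4 : 2 * m.+1%:R * Mg <= eps / 2 * K%:R.
  rewrite KR; nra.
have h5 := ler_normD (Ssum t w - Ssum K w) (Ssum K w).
rewrite subrK in h5.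
nra.
Qed.

Definition am m w := (Ssum (m.+1 ^ 2) w / ((m.+1 ^ 2)%:R)) ^+ 2.

Lemma Dep_am m : Dep (pts 0 x0 (m.+1 ^ 2)) (am m).
Proof. by move=> w w' h; rewrite /am (Dep_S _ w w' h). Qed.

Lemma E_am m : (\int[P]_w (am m w)%:E <= (Mg ^+ 2 / (m.+1%:R ^+ 2))%:E)%E.
Proof.
set K := (m.+1 ^ 2)%N.
have Kp : 0 < K%:R :> R by rewrite ltr0n expn_gt0.
have KR : (K%:R : R) = m.+1%:R ^+ 2 by rewrite /K natrX.
have dS2 : Dep (pts 0 x0 K) (fun w => Ssum K w ^+ 2).
  by move=> w w' h; rewrite (Dep_S K w w' h).
under eq_integral do rewrite /am -/K expr_div_n mulrC EFinM.
rewrite integralZl //; last exact: (integrable_Dep dS2).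
apply: (le_trans (lee_wpmul2l _ (E_S2 K))); first by rewrite lee_fin invr_ge0 exprn_ge0 // ltW.
rewrite -EFinM lee_fin -KR.
have -> : (K%:R ^+ 2)^-1 * (K%:R * Mg ^+ 2) = Mg ^+ 2 / K%:R.
  by field; rewrite gt_eqF.
by [].
Qed.

Lemma sum_inv_sq N : \sum_(0 <= m < N) (m.+1%:R ^+ 2 : R)^-1 <= 2 - 2 / N.+1%:R.
Proof.
elim: N => [|N IH]; first by rewrite big_geq // divr1 subrr.
rewrite big_nat_recr //=.
set x : R := N.+1%:R in IH *.
have x1 : 1 <= x by rewrite /x ler1n.
have -> : N.+2%:R = x + 1 by rewrite /x -natr1.
clearbody x.
suff : (x ^+ 2)^-1 <= 2 / x - 2 / (x + 1). move=> hh. apply: (le_trans (lerD IH hh)). by rewrite addrA subrK.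
have -> : 2 / x - 2 / (x + 1) = 2 / (x * (x + 1)) by field; apply/andP; split; rewrite gt_eqF //; lra.
rewrite -div1r ler_pdivrMr ?exprn_gt0 //; last by lra.
rewrite mulrC mulrA ler_pdivlMr; last by apply: mulr_gt0; lra.
nra.
Qed.

Lemma quenched_ae :
  {ae P, forall w, (fun t => t%:R^-1 * (hk 0 x0 + t%:R * e0 + Ssum t w)) @ \oo --> e0}.
Proof.
have am0 m w : (0 <= (am m w)%:E)%E by rewrite lee_fin /am sqr_ge0.
pose f : nat -> Omega -> \bar R := fun m w => (am m w)%:E.
have mA m : measurable_fun setT (f m).
  by apply: (measurable_int P); apply: (integrable_Dep (Dep_am m)).
pose A := fun w => (\sum_(0 <= m <oo) (am m w)%:E)%E.
have A0 w : (0 <= A w)%E by apply: nneseries_ge0 => k _ _.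
have mAA : measurable_fun setT A.
  rewrite /A; apply: (ge0_emeasurable_sum (P := xpredT)); [by move=> k x _ _; apply: am0 | by move=> k _; apply: mA].
have intA : (\int[P]_w A w <= (2 * Mg ^+ 2)%:E)%E.
  rewrite /A integral_nneseries //.
  apply: lime_le; first by apply: is_cvg_nneseries => k _ _; apply: integral_ge0.
  near=> N.
  apply: (@le_trans _ _ (\sum_(0 <= m < N) (Mg ^+ 2 / (m.+1%:R ^+ 2))%:E)%E).
    by apply: lee_sum => m _; apply: E_am.
  rewrite sumEFin lee_fin -mulr_sumr.
  have hN := sum_inv_sq N.
  have hM : 0 <= Mg ^+ 2 by apply: sqr_ge0.
  have : 0 <= 2 / N.+1%:R :> R by rewrite divr_ge0.
  move=> h2; apply: (le_trans (ler_wpM2l hM hN)); rewrite [X in _ <= X]mulrC; apply: ler_wpM2l => //; rewrite lerBlDr lerDl; exact: h2.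
Unshelve. all: try end_near.
have A_int : P.-integrable setT A.
  apply/integrableP; split => //.
  under eq_integral do rewrite gee0_abs //.
  by apply: (le_lt_trans intA); apply: ltey.
have := integrable_ae measurableT A_int.
apply: filterS => w /(_ I) Afin.
apply: L_cvg; apply: as_lemma => delta hdelta.
have Alt : (A w < +oo)%E by move: Afin => /fin_numPlt /andP [].
have ht := nneseries_tail_cvg Alt (fun k _ => am0 k w).
case/fine_cvgP: ht => hfin hcv.
move/cvgrPdist_lt: hcv => /(_ _ hdelta) hnear.
near=> m.
have h1 : ((am m w)%:E <= \big[+%E/0]_(m <= k <oo) (am k w)%:E)%E.
  have := @nneseries_lim_ge _ (fun k => (am k w)%:E) (fun _ => true) m m.+1 (fun k _ _ => am0 k w).
  by rewrite big_nat1.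
have h2 : \big[+%E/0]_(m <= k <oo) (am k w)%:E \is a fin_num by near: m.
have h3 : `|0 - fine (\big[+%E/0]_(m <= k <oo) (am k w)%:E)| < delta by near: m.
move: h1; rewrite -(fineK h2) lee_fin => h1.
rewrite sub0r normrN in h3.
by apply: (le_trans h1); apply: ltW; apply: (le_lt_trans (ler_norm _)).
Unshelve. all: end_near.
Qed.

Lemma annealed :
  (fun t => ((t%:R)^-1)%:E * \int[P]_w (hk 0 x0 + t%:R * e0 + Ssum t w)%:E)%E @ \oo
    --> e0%:E.
Proof.
have e t : (\int[P]_w (hk 0 x0 + t%:R * e0 + Ssum t w)%:E = (hk 0 x0 + t%:R * e0)%:E)%E.
  under eq_integral do rewrite EFinD.
  rewrite integralD //; last 2 first.
  - exact: (integrable_Dep (Dep_cst [::] (hk 0 x0 + t%:R * e0))).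
  - exact: (integrable_Dep (Dep_S t)).
  rewrite E_S adde0 integral_cst // [X in (_ * X)%E](_ : _ = 1%E) ?mule1 //.
  exact: probability_setT.
under eq_fun do rewrite e -EFinM.
apply: cvg_EFin; first by near=> t.
have := @L_cvg (hk 0 x0) e0 (fun _ => 0).
under [X in X @ _]eq_fun do rewrite addr0.
apply => eps he; near=> t; rewrite normr0 mulr_ge0 // ltW //.
Unshelve. all: end_near.
Qed.
End All.

Lemma ae_forall_fin (d : measure_display) (Omega : measurableType d) (R : realType)
  (P : probability Omega R) (T : finType) (Q : T -> Omega -> Prop) :
  (forall k, {ae P, forall w, Q k w}) -> {ae P, forall w, forall k, Q k w}.
Proof.
move=> h.
suff: forall s : seq T, {ae P, forall w, forall k, k \in s -> Q k w}.
  by move=> /(_ (enum T)); apply: filterS => w hw k; apply: hw; rewrite mem_enum.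
elim=> [|k s IH]; first by apply: filterE => w k; rewrite in_nil.
move: (h k) IH; apply: filterS2 => w h1 h2 k'.
by rewrite inE => /orP [/eqP -> //|]; apply: h2.
Qed.

Theorem lemma3p6 (R : realType) (n : nat) (S : finType) (pi : S -> R)
  (d : measure_display) (Omega : measurableType d) (P : probability Omega R)
  (xi : nat -> Zvec n -> Omega -> S)
  (P0 : Zvec n -> R) (c : Zvec n -> S -> R) (U : seq (Zvec n))
  (bc : 'cV[R]_n) (x0 : Zvec n) :
  (forall s, 0 <= pi s) -> \sum_(s : S) pi s = 1 ->
  iid_env P xi pi ->
  uniq U ->
  (forall u, u \notin U -> P0 u = 0 /\ forall s, c u s = 0) ->
  (forall u, 0 <= P0 u) -> \sum_(u <- U) P0 u = 1 ->
  (forall u s, 0 <= P0 u + c u s <= 1) ->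
  (forall s, \sum_(u <- U) c u s = 0) ->
  (forall u, \sum_(s : S) c u s * pi s = 0) ->
  (forall s, \sum_(u <- U) c u s *: toR u = bc) ->
  let b := drift0 U P0 + bc in
  let H := fun w t i j => Hq U P0 c (fun t x => xi t x w) x0 b t i j in
  (forall i j : 'I_n,
     (fun t : nat => ((t%:R)^-1)%:E * \int[P]_w (H w t i j)%:E)%E @ \oo
       --> (eta2 U P0 c pi b i j)%:E) /\
  {ae P, forall w, forall i j : 'I_n,
     (fun t : nat => (t%:R)^-1 * H w t i j : R) @ \oo --> (eta2 U P0 c pi b i j : R)}.
Proof.
move=> Hpi0 Hpi1 Hxi HU Hout HP0ge HP0 Hq Hc0 Hpi Hbc b H.
have [s0 _] : exists s : S, True.
  case: (pickP (@predT S)) => [s _|h]; first by exists s.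
  by move: Hpi1; rewrite big_pred0 // => /eqP; rewrite eq_sym oner_eq0.
have Hq0 u s : 0 <= P0 u + c u s by case/andP: (Hq u s).
have hb s i' : \sum_(u <- U) (P0 u + c u s) * (toR u) i' 0 = b i' 0.
  rewrite /b /drift0 mxE -(Hbc s) !summxE -big_split /=.
  by rewrite [RHS](eq_bigr (fun u => (P0 u + c u s) * toR u i' 0)) // => u _; rewrite !mxE mulrDl.
have he i j : eta2 U P0 c pi b i j = e0 R n U P0 b i j.
  rewrite /eta2 /e0 /Pbar; apply: eq_bigr => u _.
  rewrite (_ : \sum_(s : S) pi s * c u s = 0) ?addr0 /Dd; first by ring.
  by rewrite (eq_bigr (fun s => c u s * pi s)) ?Hpi // => s _; rewrite mulrC.
have hH w t i j : H w t i j = hk R n b i j 0 x0 + t%:R * e0 R n U P0 b i j +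
    Ssum R n S d Omega xi U P0 c b i j x0 t w.
  exact: (Hq_dec R n S U P0 c b i j x0 HP0 Hc0 hb (fun t x => xi t x w) t).
split.
  move=> i j; rewrite he.
  have := annealed R n S pi d Omega P xi s0 U P0 c b i j x0 Hxi HP0 Hc0 Hpi.
  suff -> : (fun t : nat => ((t%:R)^-1)%:E * \int[P]_w (H w t i j)%:E)%E =
    (fun t : nat => ((t%:R)^-1)%:E * \int[P]_w (hk R n b i j 0 x0 + t%:R * e0 R n U P0 b i j +
    Ssum R n S d Omega xi U P0 c b i j x0 t w)%:E)%E by [].
  apply: funext => t; congr (_ * _)%E.
  by apply: eq_integral => w _; rewrite hH.
pose Q := fun (p : 'I_n * 'I_n) w =>
  (fun t : nat => (t%:R)^-1 * H w t p.1 p.2 : R) @ \oo --> (eta2 U P0 c pi b p.1 p.2 : R).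
have hall : forall p, {ae P, forall w, Q p w}.
  move=> -[i j]; rewrite /Q /=.
  have := quenched_ae R n S pi d Omega P xi s0 U P0 c b i j x0 Hxi HP0 Hc0 Hq0 Hpi.
  apply: filterS => w hw; rewrite he.
  by under eq_fun do rewrite hH.
have := ae_forall_fin _ _ _ P _ Q hall.
by apply: filterS => w hw i j; apply: (hw (i, j)).
Qed.
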